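(* Let $0<\beta<1$, $\bar{x}\in\mathcal{X}$, and $z=F_{\bar{x}}^{-1}(\beta)$. Suppose that $x\mapsto f(x,Y)$ is continuous at $\bar{x}$ with probability 1, that $F_{\bar{x}}$ is continuous at $z$, and that $F_{\bar{x}}$ is strictly increasing at $F_{\bar{x}}^{-1}(\beta)$ in the sense that for all $\epsilon>0$, $$F_{\bar{x}}\big(F_{\bar{x}}^{-1}(\beta)-\epsilon\big)<\beta<F_{\bar{x}}\big(F_{\bar{x}}^{-1}(\beta)+\epsilon\big).$$ Then $x\mapsto F_x^{-1}(\beta)$ is continuous at $\bar{x}$.
   Context: $Y$ is a random vector in $\mathbb{R}^d$, $\mathcal{X}\subset\mathbb{R}^k$, $f:\mathcal{X}\times\mathbb{R}^d\to\mathbb{R}$ with $f(x,Y)$ measurable for all $x$, $F_x(z)=\mathbb{P}(f(x,Y)\le z)$ and $F_x^{-1}(\beta)=\inf\{z\in\mathbb{R}: F_x(z)\ge\beta\}$. *)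

(* Defs.v *)
From HB Require Import structures.
From mathcomp Require Import all_boot all_order all_algebra.
From mathcomp Require Import all_classical all_reals all_analysis.
Set Implicit Arguments. Unset Strict Implicit. Unset Printing Implicit Defensive.
Import Order.TTheory GRing.Theory Num.Theory.
Import numFieldNormedType.Exports.
Local Open Scope classical_set_scope.
Local Open Scope ring_scope.

Definition cdfF {dm : measure_display} {T : measurableType dm} {R : realType}
  (P : probability T R) {k d : nat} (f : 'rV[R]_k -> 'rV[R]_d -> R)
  (Y : T -> 'rV[R]_d) (x : 'rV[R]_k) (z : R) : R :=
  fine (P [set w | f x (Y w) <= z]).

Definition quantF {dm : measure_display} {T : measurableType dm} {R : realType}
  (P : probability T R) {k d : nat} (f : 'rV[R]_k -> 'rV[R]_d -> R)
  (Y : T -> 'rV[R]_d) (x : 'rV[R]_k) (beta : R) : R :=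
  inf [set z : R | beta <= cdfF P f Y x z].

(* Main.v *)
Require Import Defs.
From HB Require Import structures.
From mathcomp Require Import all_boot all_order all_algebra.
From mathcomp Require Import all_classical all_reals all_analysis.
From mathcomp Require Import lra.
Import Order.TTheory GRing.Theory Num.Theory.
Import numFieldNormedType.Exports.
Local Open Scope classical_set_scope.
Local Open Scope ring_scope.

Lemma key_lim (d : measure_display) (T : measurableType d) (R : realType)
  (P : probability T R) (A : nat -> set T) (S : set T) (c : \bar R) :
  (forall n, measurable (A n)) -> measurable S ->
  {ae P, forall w, S w -> exists M, forall n, (M <= n)%N -> A n w} ->
  (forall n, P (A n) <= c)%E -> (P S <= c)%E.
Proof.
move=> mA mS [N [mN PN0 sub]] hc.
pose B M := \bigcap_(n in [set n | (M <= n)%N]) A n.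
have mB M : measurable (B M).
  by apply: bigcap_measurable; [exists M => /= | move=> *].
have mU : measurable (\bigcup_M B M) by apply: bigcupT_measurable.
have homo : {homo B : n m / (n <= m)%N >-> (n <= m)%O}.
  move=> n m nm; apply/subsetPset => w Bw k /= mk; apply: Bw => /=.
  exact: leq_trans nm mk.
have cv := @nondecreasing_cvg_mu _ _ _ P _ mB mU homo.
have PU : (P (\bigcup_M B M) <= c)%E.
  rewrite -(cvg_lim _ cv) //; apply: lime_le; first by apply/cvg_ex; eexists; exact: cv.
  near=> M => /=; apply: le_trans (hc M); apply: le_measure; rewrite ?inE //.

  by move=> w; rewrite /B => Bw; apply: Bw => /=.
have SU : S `<=` N `|` \bigcup_M B M.
  move=> w Sw; case: (pselect (N w)) => Nw; first by left.
  right; have : ~ ~ (S w -> exists M, forall n, (M <= n)%N -> A n w).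
    by move=> H; apply: Nw; apply: sub.
  move=> /contrapT /(_ Sw) [M HM]; exists M => //; move=> n /= Mn; exact: HM.
apply: le_trans (le_measure _ _ _ SU) _; rewrite ?inE //; first exact: measurableU.
apply: le_trans (@measureU2 _ _ _ P _ _ mN mU) _.
apply: le_trans _ PU; rewrite -[leRHS]add0e leeD2r //; rewrite le_eqVlt; apply/orP; left; apply/eqP; exact: PN0.
Unshelve. all: end_near.
Qed.

Lemma seq_ball (R : realType) k (xbar : 'rV[R]_k) (xs : nat -> 'rV[R]_k) r :
  0 < r -> (forall n, ball xbar n.+1%:R^-1 (xs n)) ->
  exists M, forall n, (M <= n)%N -> ball xbar r (xs n).
Proof.
move=> r0 hb; exists (Num.Def.archi_bound r^-1) => n Mn.
apply: (le_ball (e1 := n.+1%:R^-1)) (hb n).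
apply/ltW; rewrite invf_plt ?posrE ?invr_gt0 ?ltr0Sn //.
apply: (lt_le_trans (archi_boundP _)); first by rewrite invr_ge0 ltW.
by rewrite ler_nat; apply: leq_trans Mn _.
Qed.

Lemma pick_seq (R : realType) k (X : set 'rV[R]_k) (xbar : 'rV[R]_k)
  (Q : 'rV[R]_k -> Prop) :
  ~ (\forall x \near within X (nbhs xbar), Q x) ->
  exists xs : nat -> 'rV[R]_k,
    forall n, [/\ ball xbar n.+1%:R^-1 (xs n), X (xs n) & ~ Q (xs n)].
Proof.
move=> H.
have H' : forall n : nat, exists x, [/\ ball xbar n.+1%:R^-1 x, X x & ~ Q x].
  move=> n; apply: contrapT => Hn; apply: H.
  rewrite /within /prop_near1 /=; apply/nbhs_ballP.
  exists n.+1%:R^-1; first by rewrite /= invr_gt0 ltr0Sn.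
  move=> x bx Xx; apply: contrapT => nQ; apply: Hn; exists x; split => //.

have [xs Hxs] := choice H'; by exists xs.
Qed.

Theorem mainTheorem13 (dm : measure_display) (T : measurableType dm)
  (R : realType) (P : probability T R) (k d : nat)
  (X : set 'rV[R]_k) (f : 'rV[R]_k -> 'rV[R]_d -> R) (Y : T -> 'rV[R]_d)
  (beta : R) (xbar : 'rV[R]_k) :
  (forall x, X x -> measurable_fun setT (fun w => f x (Y w))) ->
  0 < beta < 1 ->
  X xbar ->
  let z := quantF P f Y xbar beta in
  {ae P, forall w, (fun x => f x (Y w)) @ within X (nbhs xbar) --> f xbar (Y w)} ->
  {for z, continuous (cdfF P f Y xbar)} ->
  (forall eps, 0 < eps ->
     cdfF P f Y xbar (z - eps) < beta < cdfF P f Y xbar (z + eps)) ->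
  (fun x => quantF P f Y x beta) @ within X (nbhs xbar) --> z.
Proof.
move=> mf /andP[b0 b1] Xb z hae _ hinc.
pose F x t := cdfF P f Y x t.
have meas x t : X x -> measurable [set w | f x (Y w) <= t].
  move=> Xx; have := measurable_fun_le measurableT (mf x Xx) (measurable_cst t).
  by rewrite setTI.
have PF x t : X x -> P [set w | f x (Y w) <= t] = (F x t)%:E.
  by move=> Xx; rewrite /F /cdfF fineK //; apply: fin_num_measure; exact: meas.
have PFC x t : X x -> P (~` [set w | f x (Y w) <= t]) = (1 - F x t)%:E.
  move=> Xx; rewrite probability_setC; last exact: meas.
  apply: (@eq_trans _ _ (1 - (F x t)%:E)%E); first by congr (_ - _)%E; exact: PF.
  exact: (esym (EFinB _ _)).
have mono x s t : X x -> s <= t -> F x s <= F x t.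
  move=> Xx st; rewrite -lee_fin -!PF //; apply: le_measure; rewrite ?inE; try exact: meas.
  by move=> w /= h; apply: le_trans h st.
have up e : 0 < e -> \forall x \near within X (nbhs xbar), beta < F x (z + e).
  move=> e0; apply: contrapT => /pick_seq [xs Hxs].
  have := hinc (e / 2); rewrite divr_gt0 // => /(_ isT) /andP[_ h2].
  have : (P [set w | (f xbar (Y w) <= z + e / 2)%R] <= beta%:E)%E.
    apply: (@key_lim _ _ _ P (fun n => [set w | f (xs n) (Y w) <= z + e])).
    - by move=> n; apply: meas; case: (Hxs n).
    - exact: meas.
    - apply: filterS hae => w /cvgrPdist_lt /(_ (e / 2)).
      rewrite divr_gt0 // => /(_ isT) /nbhs_ballP [r r0 hr] /= Sw.
      have [M HM] := @seq_ball _ _ xbar xs r r0 (fun n => let: And3 h _ _ := Hxs n in h).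
      exists M => n /HM bn; case: (Hxs n) => _ Xn _.
      have := hr _ bn Xn; rewrite /= ltr_norml => /andP[h _].
      move: Sw; lra.
    - move=> n; case: (Hxs n) => _ Xn nQ; rewrite PF // lee_fin.
      by rewrite leNgt; apply/negP.
  by rewrite PF // lee_fin leNgt h2.
have down e : 0 < e -> \forall x \near within X (nbhs xbar), F x (z - e) < beta.
  move=> e0; apply: contrapT => /pick_seq [xs Hxs].
  have := hinc e; rewrite e0 => /(_ isT) /andP[h1 _].
  have : (P (~` [set w | (f xbar (Y w) <= z - e)%R]) <= (1 - beta)%:E)%E.
    apply: (@key_lim _ _ _ P (fun n => ~` [set w | f (xs n) (Y w) <= z - e])).
    - by move=> n; apply: measurableC; apply: meas; case: (Hxs n).
    - by apply: measurableC; exact: meas.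
    - apply: filterS hae => w /cvgrPdist_lt /(_ (f xbar (Y w) - (z - e))) H Sw.
      have Sw' : z - e < f xbar (Y w) by move: Sw => /= /negP; rewrite -ltNge.
      move: H; rewrite subr_gt0 Sw' => /(_ isT) /nbhs_ballP [r r0 hr].
      have [M HM] := @seq_ball _ _ xbar xs r r0 (fun n => let: And3 h _ _ := Hxs n in h).
      exists M => n /HM bn; case: (Hxs n) => _ Xn _.
      have := hr _ bn Xn; rewrite /= ltr_norml => /andP[_ h].
      move=> /= h'; move: h h' Sw'; lra.
    - move=> n; case: (Hxs n) => _ Xn nQ; rewrite PFC // lee_fin.
      have : beta <= F (xs n) (z - e) by rewrite leNgt; apply/negP.
      lra.
  rewrite PFC // lee_fin /F /= => hh; lra.
apply/cvgrPdist_lt => e e0.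
have e20 : 0 < e / 2 by rewrite divr_gt0.
near=> x.
have Xx : X x by near: x; exact: withinT.
have hu : beta < F x (z + e / 2) by near: x; exact: up.
have hd : F x (z - e / 2) < beta by near: x; exact: down.
pose S := [set t | beta <= F x t].
have Sne : S (z + e / 2) by rewrite /S /= ltW.
have lb : lbound S (z - e / 2).
  move=> t; rewrite /S /= => St; rewrite leNgt; apply/negP => tlt.
  have := mono x _ _ Xx (ltW tlt); move: St hd; rewrite /F /=; lra.
have q1 : quantF P f Y x beta <= z + e / 2.
  by have := ge_inf (ex_intro _ _ lb); apply.
have q2 : z - e / 2 <= quantF P f Y x beta.
  by apply: lb_le_inf => //; exists (z + e / 2).
rewrite ltr_norml; apply/andP; split; lra.
Unshelve. all: end_near.
Qed.
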